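(* Let $X$ be a perfectly normal $T_1$ space. The following are equivalent: (1) $X$ is finite; (2) every maximal ideal of $B_1(X)$ is fixed; (3) every proper ideal of $B_1(X)$ is fixed.
   Context: For a topological space $X$, $B_1(X)$ denotes the ring (pointwise operations) of all Baire one functions $f:X\to\mathbb{R}$, i.e. pointwise limits of sequences of continuous real-valued functions. For $f$, $Z(f)=\{x: f(x)=0\}$. A proper ideal $I$ is fixed if $\bigcap_{f\in I}Z(f)\neq\emptyset$, and free otherwise. *)

(* Defs.v *)
From Stdlib Require Import Reals Ranalysis List.
Open Scope R_scope.

Definition is_topology {X : Type} (T : (X -> Prop) -> Prop) : Prop :=
  T (fun _ => True) /\ T (fun _ => False) /\
  (forall (F : (X -> Prop) -> Prop),
      (forall U, F U -> T U) -> T (fun x => exists U, F U /\ U x)) /\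
  (forall U V, T U -> T V -> T (fun x => U x /\ V x)).

Definition is_closed {X : Type} (T : (X -> Prop) -> Prop) (A : X -> Prop) : Prop :=
  T (fun x => ~ A x).

Definition T1_space {X : Type} (T : (X -> Prop) -> Prop) : Prop :=
  forall x y : X, x <> y -> exists U, T U /\ U x /\ ~ U y.

Definition normal_space {X : Type} (T : (X -> Prop) -> Prop) : Prop :=
  forall A B : X -> Prop, is_closed T A -> is_closed T B ->
    (forall x, A x -> B x -> False) ->
    exists U V, T U /\ T V /\ (forall x, A x -> U x) /\ (forall x, B x -> V x) /\
      (forall x, U x -> V x -> False).

Definition G_delta {X : Type} (T : (X -> Prop) -> Prop) (A : X -> Prop) : Prop :=
  exists U : nat -> X -> Prop, (forall n, T (U n)) /\
    (forall x, A x <-> forall n, U n x).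

Definition perfectly_normal {X : Type} (T : (X -> Prop) -> Prop) : Prop :=
  normal_space T /\ (forall A, is_closed T A -> G_delta T A).

Definition continuous_on {X : Type} (T : (X -> Prop) -> Prop) (f : X -> R) : Prop :=
  forall D : R -> Prop, open_set D -> T (fun x => D (f x)).

Definition baire_one {X : Type} (T : (X -> Prop) -> Prop) (f : X -> R) : Prop :=
  exists fn : nat -> X -> R, (forall n, continuous_on T (fn n)) /\
    forall x, Un_cv (fun n => fn n x) (f x).

Definition is_ideal {X : Type} (T : (X -> Prop) -> Prop) (I : (X -> R) -> Prop) : Prop :=
  (forall f, I f -> baire_one T f) /\
  I (fun _ => 0) /\
  (forall f g, I f -> I g -> I (fun x => f x + g x)) /\
  (forall f g, I f -> baire_one T g -> I (fun x => g x * f x)).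

Definition is_proper_ideal {X : Type} (T : (X -> Prop) -> Prop) (I : (X -> R) -> Prop) : Prop :=
  is_ideal T I /\ exists f, baire_one T f /\ ~ I f.

Definition is_maximal_ideal {X : Type} (T : (X -> Prop) -> Prop) (I : (X -> R) -> Prop) : Prop :=
  is_proper_ideal T I /\
  forall J, is_proper_ideal T J -> (forall f, I f -> J f) -> (forall f, J f -> I f).

Definition fixed_ideal {X : Type} (I : (X -> R) -> Prop) : Prop :=
  exists x : X, forall f, I f -> f x = 0.

Definition finite_type (X : Type) : Prop := exists l : list X, forall x, In x l.

(* Main.v *)
Require Import Defs.
From Stdlib Require Import Reals Ranalysis List.
From HB Require Import structures.
From mathcomp Require Import all_boot all_order all_algebra.
From mathcomp Require Import boolp classical_sets reals topology normedtype.
From mathcomp Require Import Rstruct Rstruct_topology.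
From mathcomp Require urysohn.
From Stdlib Require Import Classical FunctionalExtensionality PropExtensionality ClassicalEpsilon IndefiniteDescription Lra Lia.
Import Order.TTheory GRing.Theory Num.Theory.

Set Warnings "-notation-overridden".
Local Open Scope classical_set_scope.

Definition carrier (X : Type) (T : (X -> Prop) -> Prop) (hT : is_topology T) : Type := X.
HB.instance Definition _ X T hT := gen_eqMixin (@carrier X T hT).
HB.instance Definition _ X T hT := gen_choiceMixin (@carrier X T hT).

Lemma carrier_opT X T (hT : is_topology T) : (T : set_system (@carrier X T hT)) setT.
Proof. by case: hT. Qed.

Lemma carrier_opI X T (hT : is_topology T) :
  setI_closed (T : set_system (@carrier X T hT)).
Proof. move=> A B; have [_ [_ [_ h]]] := hT; exact: h. Qed.

Lemma carrier_bigU X T (hT : is_topology T) (I : Type) (f : I -> set (@carrier X T hT)) :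
  (forall i, T (f i)) -> T (\bigcup_i f i).
Proof.
move=> hf; have [_ [_ [hU _]]] := hT.
have := hU (fun U => exists i, U = f i).
have -> : (fun x => exists U, (exists i, U = f i) /\ U x) = \bigcup_i f i.
  apply/funext => x; apply/propext; split.
    by case=> U [[i ->] fx]; exists i.
  by case=> i _ fx; exists (f i); split => //; exists i.
apply => U [i ->]; exact: hf.
Qed.

HB.instance Definition _ (X : Type) (T : (X -> Prop) -> Prop) (hT : is_topology T) :=
  @isOpenTopological.Build (@carrier X T hT) T
  (@carrier_opT X T hT) (@carrier_opI X T hT) (@carrier_bigU X T hT).

Lemma carrier_openE X T (hT : is_topology T) (A : set (@carrier X T hT)) :
  open A <-> T A.
Proof.
split; last first.
  by move=> TA; rewrite openE => p Ap; exists A; split.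
rewrite openE => oA.
have -> : A = \bigcup_(B : {B : set (@carrier X T hT) & T B /\ B `<=` A}) projT1 B.
  apply/funext => p; apply/propext; split; last first.
    by case=> B _ Bp; have [_] := projT2 B; apply.
  move=> Ap; have := oA p Ap; case=> B [TB Bp sBA].
  by exists (existT _ B (conj TB sBA)).
by apply: carrier_bigU => B; have [] := projT2 B.
Qed.

Lemma carrier_closedE X T (hT : is_topology T) (A : set (@carrier X T hT)) :
  closed A <-> is_closed T A.
Proof. by rewrite -openC carrier_openE. Qed.

Lemma stdlib_open (D : Rdefinitions.R -> Prop) : open_set D -> open (D : set Rdefinitions.R).
Proof.
move=> oD; rewrite openE => x Dx.
have [[d dpos] hd] := oD x Dx.
rewrite /interior; apply/nbhs_ballP; exists d; first by apply/RltP.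
move=> y bxy; apply: hd; rewrite /disc /=.
move: bxy; rewrite /ball /= => /RltP.
by rewrite -Rabs_Ropp Ropp_minus_distr.
Qed.

Lemma urysohn_bridge X T (hT : is_topology T) (hn : Defs.normal_space T)
  (A B : X -> Prop) : is_closed T A -> is_closed T B ->
  (forall x, A x -> B x -> False) ->
  exists f : X -> Rdefinitions.R, continuous_on T f /\ (forall x, A x -> f x = 0%R) /\
    (forall x, B x -> f x = 1%R).
Proof.
move=> cA cB AB.
have nT : normal_space (@carrier X T hT).
  have := proj2 (@urysohn.normal_openP (Rdefinitions.R : realType) (@carrier X T hT)).
  apply => A' B' /carrier_closedE cA' /carrier_closedE cB' AB0.
  have [U [V [TU [TV [AU [BV UV]]]]]] := hn A' B' cA' cB'
    (fun x a b => (@eq_ind _ _ (fun S => S x) (conj a b) _ AB0)).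
  exists U, V; split.
  - exact/carrier_openE.
  - exact/carrier_openE.
  - exact: AU.
  - exact: BV.
  - by apply/seteqP; split => [x [ux vx]|x //]; case: (UV x ux vx).
have : urysohn.uniform_separator (A : set (@carrier X T hT)) B.
  apply: (proj1 (@urysohn.normal_separatorP (Rdefinitions.R : realType) _) nT).
  - exact/carrier_closedE.
  - exact/carrier_closedE.
  - by apply/seteqP; split => [x [ax bx]|x //]; case: (AB x ax bx).
move=> /(@urysohn.uniform_separatorP _ (Rdefinitions.R : realType)) [f [cf _ fA fB]].
exists f; split; last split.
- move=> D oD.
  have := proj1 (continuousP f) cf _ (stdlib_open D oD).
  by move/carrier_openE.
- by move=> x Ax; apply: (fA (f x)); exists x.
- by move=> x Bx; apply: (fB (f x)); exists x.
Qed.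

Lemma mc_open_std (D : Rdefinitions.R -> Prop) : open (D : set Rdefinitions.R) -> open_set D.
Proof.
rewrite openE => oD x Dx.
have := oD x Dx; rewrite /interior => /nbhs_ballP [e /RltP epos he].
exists (mkposreal e epos) => y hy; apply: he.
rewrite /ball /= distrC; apply/RltP; exact: hy.
Qed.

Lemma cont_bridge X T (hT : is_topology T) (f : X -> Rdefinitions.R) :
  continuous_on T f <-> continuous (f : @carrier X T hT -> Rdefinitions.R).
Proof.
split.
  move=> cf; apply/continuousP => A oA; apply/carrier_openE.
  exact: (cf A (mc_open_std A oA)).
move=> cf D oD.
have := proj1 (@continuousP (@carrier X T hT) _ f) cf _ (stdlib_open D oD).
by move/carrier_openE.
Qed.

Arguments cont_bridge {X T} hT {f}.

Lemma cont_plus X T (hT : is_topology T) (f g : X -> Rdefinitions.R) :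
  continuous_on T f -> continuous_on T g -> continuous_on T (fun x => (f x + g x)%R).
Proof.
move=> /(cont_bridge hT) cf /(cont_bridge hT) cg; apply/(cont_bridge hT).
move=> x; exact: (@continuousD _ (Rdefinitions.R^o) (@carrier X T hT) f g x (cf x) (cg x)).
Qed.

Lemma cont_mult X T (hT : is_topology T) (f g : X -> Rdefinitions.R) :
  continuous_on T f -> continuous_on T g -> continuous_on T (fun x => (f x * g x)%R).
Proof.
move=> /(cont_bridge hT) cf /(cont_bridge hT) cg; apply/(cont_bridge hT).
move=> x; exact: (@continuousM _ (@carrier X T hT) f g x (cf x) (cg x)).
Qed.

Local Open Scope R_scope.

Lemma proper_not1 X (T : (X -> Prop) -> Prop) (J : (X -> Rdefinitions.R) -> Prop) :
  is_proper_ideal T J -> ~ J (fun _ => 1).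
Proof.
move=> [[_ [_ [_ hm]]] [f [bf nf]]] J1; apply: nf.
have := hm _ f J1 bf.
have -> : (fun x => (f x * 1)) = f by apply/funext => x; rewrite Rmult_1_r.
by [].
Qed.

Lemma extend_max X (T : (X -> Prop) -> Prop) (h1 : baire_one T (fun _ => 1))
  (I : (X -> Rdefinitions.R) -> Prop) : is_proper_ideal T I ->
  exists M, is_maximal_ideal T M /\ (forall f, I f -> M f).
Proof.
move=> pI.
pose Ty := {J : (X -> Rdefinitions.R) -> Prop | is_proper_ideal T J /\ (forall f, I f -> J f)}.
pose t0 : Ty := exist _ I (conj pI (fun f h => h)).
pose Rl := fun (s t : Ty) => `[< forall f, proj1_sig s f -> proj1_sig t f >].
have [| | |t tmax] := @ZL_preorder Ty t0 Rl.
- by move=> s; apply/asboolP.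
- move=> r s t /asboolP h1' /asboolP h2; apply/asboolP => f rf; exact: h2 _ (h1' _ rf).
- move=> A tot.
  have [[s0 As0]|nA] := pselect (exists s, A s); last first.
    by exists t0 => s As; case: nA; exists s.
  pose U := fun f => exists s, A s /\ proj1_sig s f.
  have pU : is_proper_ideal T U.
    split; last first.
      exists (fun _ => 1); split => //.
      move=> [s [_ hs]]; have [ps _] := proj2_sig s; exact: (proper_not1 _ _ _ ps hs).
    split.
      move=> f [s [_ hs]]; have [[[hb _] _] _] := proj2_sig s; exact: hb.
    split.
      exists s0; split => //; have [[[_ [h0 _]] _] _] := proj2_sig s0; exact: h0.
    split.
      move=> f g [s1 [As1 f1]] [s2 [As2 g2]].
      case: (tot s1 s2 As1 As2) => /asboolP hsub.
        exists s2; split => //; have [[[_ [_ [hp _]]] _] _] := proj2_sig s2.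
        exact: hp _ _ (hsub _ f1) g2.
      exists s1; split => //; have [[[_ [_ [hp _]]] _] _] := proj2_sig s1.
      exact: hp _ _ f1 (hsub _ g2).
    move=> f g [s [As sf]] bg; exists s; split => //.
    have [[[_ [_ [_ hm]]] _] _] := proj2_sig s; exact: hm.
  have IU : forall f, I f -> U f.
    move=> f If; exists s0; split => //; have [_ h] := proj2_sig s0; exact: h.
  exists (exist _ U (conj pU IU)) => s As; apply/asboolP => f sf.
  by exists s.
- exists (proj1_sig t); split; last by have [_ h] := proj2_sig t.
split; first by have [h _] := proj2_sig t.
move=> J pJ tJ.
have IJ : forall f, I f -> J f.
  move=> f If; apply: tJ; have [_ h] := proj2_sig t; exact: h.
have := tmax (exist _ J (conj pJ IJ)).
by move=> /(_ (asboolT tJ)) /asboolP.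
Qed.



Lemma const_cont X T (hT : is_topology T) (c : R) : continuous_on T (fun _ : X => c).
Proof.
intros D _. destruct hT as [hTr [hFa _]].
destruct (classic (D c)) as [h|h].
- replace (fun _ : X => D c) with (fun _ : X => True); [exact hTr|].
  apply functional_extensionality; intro; apply propositional_extensionality; tauto.
- replace (fun _ : X => D c) with (fun _ : X => False); [exact hFa|].
  apply functional_extensionality; intro; apply propositional_extensionality; tauto.
Qed.

Lemma cv_const (c : R) : Un_cv (fun _ => c) c.
Proof.
intros eps heps; exists 0%nat; intros n _; unfold R_dist.
replace (c - c) with 0 by ring. rewrite Rabs_R0; lra.
Qed.

Lemma cont_baire X T (f : X -> R) : continuous_on T f -> baire_one T f.
Proof. intro cf; exists (fun _ => f); split; [intros; exact cf|intros; apply cv_const]. Qed.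

Lemma baire_plus X T (hT : is_topology T) (f g : X -> R) :
  baire_one T f -> baire_one T g -> baire_one T (fun x => f x + g x).
Proof.
intros [fn [cf lf]] [gn [cg lg]].
exists (fun n x => fn n x + gn n x); split.
- intro n; apply cont_plus; auto.
- intro x; apply CV_plus; auto.
Qed.

Lemma baire_mult X T (hT : is_topology T) (f g : X -> R) :
  baire_one T f -> baire_one T g -> baire_one T (fun x => f x * g x).
Proof.
intros [fn [cf lf]] [gn [cg lg]].
exists (fun n x => fn n x * gn n x); split.
- intro n; apply cont_mult; auto.
- intro x; apply CV_mult; auto.
Qed.

Lemma T1_sep_list X T (hT : is_topology T) (hT1 : T1_space T) (x : X) (l : list X) :
  exists V, T V /\ V x /\ forall y, In y l -> y <> x -> ~ V y.
Proof.
induction l as [|a l IH].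
- exists (fun _ => True); split; [apply hT|split; [exact I|intros y []]].
- destruct IH as [V [TV [Vx HV]]].
  destruct (classic (a = x)) as [e|ne].
  + exists V; split; [exact TV|split; [exact Vx|]].
    intros y [<-|Hy] Hyx; [contradiction|exact (HV y Hy Hyx)].
  + destruct (hT1 x a (fun e => ne (Logic.eq_sym e))) as [U [TU [Ux nUa]]].
    exists (fun z => V z /\ U z); split.
    * destruct hT as [_ [_ [_ hI]]]; apply hI; assumption.
    * split; [split; assumption|].
      intros y [<-|Hy] Hyx [Vy Uy]; [contradiction|exact (HV y Hy Hyx Vy)].
Qed.

Lemma fin_all_cont X T (hT : is_topology T) (hT1 : T1_space T) (hf : finite_type X)
  (f : X -> R) : continuous_on T f.
Proof.
destruct hf as [l hl].
assert (sing : forall x : X, T (fun y => y = x)).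
{ intro x. destruct (T1_sep_list X T hT hT1 x l) as [V [TV [Vx HV]]].
  replace (fun y => y = x) with V; [exact TV|].
  apply functional_extensionality; intro y; apply propositional_extensionality; split.
  - intro Vy; apply NNPP; intro ne; exact (HV y (hl y) ne Vy).
  - intros ->; exact Vx. }
intros D _.
destruct hT as [_ [_ [hU _]]].
specialize (hU (fun U => exists y, D (f y) /\ U = (fun z => z = y))).
replace (fun x => D (f x)) with (fun z => exists U, (exists y, D (f y) /\ U = (fun z => z = y)) /\ U z).
- apply hU; intros U [y [_ ->]]; apply sing.
- apply functional_extensionality; intro z; apply propositional_extensionality; split.
  + intros [U [[y [Dy ->]] ->]]; exact Dy.
  + intro Dz; exists (fun w => w = z); split; [exists z; split; auto|reflexivity].
Qed.

Lemma fin_fixed X T (hT : is_topology T) (hT1 : T1_space T) (hf : finite_type X)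
  (I : (X -> R) -> Prop) : is_proper_ideal T I -> fixed_ideal I.
Proof.
intros [[hb [h0 [hp hm]]] [h [bh nh]]].
assert (allb : forall f : X -> R, baire_one T f).
{ intro f; apply cont_baire, fin_all_cont; assumption. }
apply NNPP; intro nf.
assert (H : forall x, exists f, I f /\ f x <> 0).
{ intro x; apply NNPP; intro hx; apply nf; exists x; intros f If.
  apply NNPP; intro hfx; apply hx; exists f; split; assumption. }
assert (L : forall l : list X, exists g, I g /\ (forall z, 0 <= g z) /\
          (forall y, In y l -> 0 < g y)).
{ induction l as [|a l IH].
  - exists (fun _ => 0); split; [exact h0|split; [intros; lra|intros y []]].
  - destruct IH as [g [Ig [g0 gp]]]. destruct (H a) as [fa [Ifa fa0]].
    exists (fun x => g x + fa x * fa x); split.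
    + apply (hp g (fun x => fa x * fa x) Ig (hm fa fa Ifa (allb fa))).
    + split.
      * intro z; specialize (g0 z); nra.
      * intros y [<-|Hy].
        -- specialize (g0 a). assert (0 < fa a * fa a) by (apply Rsqr_pos_lt; exact fa0). lra.
        -- specialize (gp y Hy). assert (0 <= fa y * fa y) by nra. lra. }
destruct hf as [l hl]. destruct (L l) as [g [Ig [_ gp]]].
apply nh.
replace h with (fun x => (h x / g x) * g x).
- apply hm; [exact Ig|apply allb].
- apply functional_extensionality; intro x. specialize (gp x (hl x)). field; lra.
Qed.



Lemma sing_closed X T (hT : is_topology T) (hT1 : T1_space T) (x : X) :
  is_closed T (fun z => z = x).
Proof.
unfold is_closed. destruct hT as [_ [_ [hU _]]].
specialize (hU (fun U => T U /\ ~ U x)).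
replace (fun z => ~ z = x) with (fun z => exists U, (T U /\ ~ U x) /\ U z).
- apply hU; intros U [TU _]; exact TU.
- apply functional_extensionality; intro z; apply propositional_extensionality; split.
  + intros [U [[_ nUx] Uz]] ->; contradiction.
  + intro ne. destruct (hT1 z x ne) as [U [TU [Uz nUx]]]. exists U; auto.
Qed.

Lemma indicator_baire X T (hT : is_topology T) (hT1 : T1_space T)
  (hpn : perfectly_normal T) (x : X) :
  baire_one T (fun z => if excluded_middle_informative (z = x) then 1 else 0).
Proof.
destruct hpn as [hn hgd].
destruct (hgd _ (sing_closed X T hT hT1 x)) as [U [TU HU]].
set (V := fun n z => forall k, le k n -> U k z).
assert (TV : forall n, T (V n)).
{ induction n as [|n IH].
  - replace (V 0%nat) with (U 0%nat); [apply TU|].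
    apply functional_extensionality; intro z; apply propositional_extensionality; split.
    + intros h k hk. replace k with 0%nat by lia. exact h.
    + intro h; apply h; lia.
  - replace (V (S n)) with (fun z => V n z /\ U (S n) z).
    + destruct hT as [_ [_ [_ hI]]]; apply hI; [exact IH|apply TU].
    + apply functional_extensionality; intro z; apply propositional_extensionality; split.
      * intros [h1 h2] k hk. destruct (Nat.eq_dec k (S n)) as [->|ne]; [exact h2|apply h1; lia].
      * intro h; split; [intros k hk; apply h; lia|apply h; lia]. }
assert (Vx : forall n, V n x) by (intros n k _; apply (proj1 (HU x) (Logic.eq_refl x))).
assert (G : forall n, exists g : X -> R, continuous_on T g /\
          (forall z, ~ V n z -> g z = 0) /\ (forall z, z = x -> g z = 1)).
{ intro n. apply (urysohn_bridge X T hT hn).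
  - unfold is_closed. replace (fun z => ~ ~ V n z) with (V n); [apply TV|].
    apply functional_extensionality; intro z; apply propositional_extensionality; split;
      [tauto|apply NNPP].
  - apply sing_closed; assumption.
  - intros z nV ->; exact (nV (Vx n)). }
destruct (functional_choice _ G) as [g Hg].
exists g; split; [intro n; apply (Hg n)|].
intro z. cbv beta. destruct (excluded_middle_informative (z = x)) as [e|ne].
- intros eps heps; exists 0%nat; intros n _. unfold R_dist.
  rewrite (proj2 (proj2 (Hg n)) z e). cbn [is_left]. replace (1 - 1) with 0 by ring. rewrite Rabs_R0; lra.
- assert (ex : exists m, ~ U m z).
  { apply NNPP; intro h; apply ne, (proj2 (HU z)); intro m; apply NNPP; intro hm; apply h; exists m; exact hm. }
  destruct ex as [m nUm].
  intros eps heps; exists m; intros n hn'. unfold R_dist.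
  rewrite (proj1 (proj2 (Hg n)) z). 
  + cbn [is_left]. replace (0 - 0) with 0 by ring. rewrite Rabs_R0; lra.
  + intro Vz; apply nUm, Vz; lia.
Qed.

Require Import Defs.

Theorem theorem3p9 (X : Type) (T : (X -> Prop) -> Prop)
  (hT : is_topology T) (hT1 : T1_space T) (hpn : perfectly_normal T) :
  (finite_type X <-> (forall I, is_maximal_ideal T I -> fixed_ideal I)) /\
  ((forall I, is_maximal_ideal T I -> fixed_ideal I) <->
   (forall I, is_proper_ideal T I -> fixed_ideal I)).
Proof.
assert (h13 : finite_type X -> forall I, is_proper_ideal T I -> fixed_ideal I).
{ intros hf I pI; apply (fin_fixed X T hT hT1 hf I pI). }
assert (bc : forall c : R, baire_one T (fun _ : X => c)).
{ intro c; apply cont_baire, const_cont, hT. }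
assert (h21 : (forall I, is_maximal_ideal T I -> fixed_ideal I) -> finite_type X).
{ intro H. apply NNPP; intro nf.
  set (I := fun f : X -> R => baire_one T f /\ exists l, forall x, f x <> 0 -> In x l).
  assert (pI : is_proper_ideal T I).
  { split; [split; [|split; [|split]]|].
    - intros f [bf _]; exact bf.
    - split; [apply bc|exists nil; intros x h; exfalso; apply h; reflexivity].
    - intros f g [bf [lf hf]] [bg [lg hg]]; split; [apply baire_plus; assumption|].
      exists (lf ++ lg); intros x hx; apply in_or_app.
      destruct (classic (f x = 0)) as [e|ne].
      + right; apply hg; intro e'; apply hx; rewrite e e'; ring.
      + left; apply hf, ne.
    - intros f g [bf [lf hf]] bg; split; [apply baire_mult; assumption|].
      exists lf; intros x hx; apply hf; intro e; apply hx; rewrite e; ring.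
    - exists (fun _ => 1); split; [apply bc|].
      intros [_ [l hl]]; apply nf; exists l; intro x; apply hl; lra. }
  destruct (extend_max X T (bc 1) I pI) as [M [mM IM]].
  destruct (H M mM) as [p hp].
  set (chi := fun z => if excluded_middle_informative (z = p) then 1 else 0).
  assert (Ichi : I chi).
  { split; [apply indicator_baire; assumption|].
    exists (p :: nil); intros x hx; left.
    unfold chi in hx; destruct (excluded_middle_informative (x = p)) as [e|ne];
      [symmetry; exact e|exfalso; apply hx; reflexivity]. }
  specialize (hp chi (IM chi Ichi)).
  unfold chi in hp; destruct (excluded_middle_informative (p = p)) as [e0|ne];
    [cbn [is_left] in hp; lra|apply ne; reflexivity]. }
split; split.
- intros hf I mI; apply h13; [exact hf|exact (proj1 mI)].
- exact h21.
- intros H I pI; apply h13; [apply h21, H|exact pI].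
- intros H I mI; apply H, mI.
Qed.
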